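(* Let $n\ge 1$ and let $\pi$ be a uniformly random permutation of $[n]=\{1,\dots,n\}$. For $1\le i\le n$, let the reduction of $\pi$ to $[i]$ be the permutation $\sigma$ of $[i]$ defined by: for $j\in[i]$, $\sigma(j)=\pi^{m}(j)$, where $m\ge 1$ is the least positive integer with $\pi^{m}(j)\in[i]$ (equivalently, $\sigma$ is obtained by deleting the elements $i+1,\dots,n$ from the cycle notation of $\pi$). Let $X$ be the largest $i\in\{1,\dots,n\}$ such that the reduction of $\pi$ to $[i]$ is unicyclic (consists of a single cycle). Then \[\mathbb P(X=i)=\frac{1}{i}-\frac{1}{i+1}=\frac{1}{i(i+1)}\quad (1\le i\le n-1),\qquad \mathbb P(X=n)=\frac1n.\]
   Context: A permutation is unicyclic if its cycle decomposition consists of exactly one cycle. The reduction to $[1]$ is the identity on $\{1\}$, which counts as unicyclic. *)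

(* Defs.v *)
From HB Require Import structures.
From mathcomp Require Import all_boot all_order all_algebra all_fingroup.
Set Implicit Arguments. Unset Strict Implicit. Unset Printing Implicit Defensive.

(* [n] = {1,...,n} is represented by 'I_n = {0,...,n-1} (k <-> k+1);
   [i] = {1..i} is then the set of ordinals/naturals with value < i. *)

Definition pstep n (p : {perm 'I_n}) (x : nat) : nat :=
  if insub x is Some o then val (p o) else x.

(* least m >= 1 such that pi^m(j) lies in [i]  (it is always <= n) *)
Definition first_return n (p : {perm 'I_n}) (i j : nat) : nat :=
  (find (fun k => iter k.+1 (pstep p) j < i) (iota 0 n)).+1.

Definition reduction n (p : {perm 'I_n}) (i j : nat) : nat :=
  iter (first_return p i j) (pstep p) j.

Definition unicyclic_reduction n (p : {perm 'I_n}) (i : nat) : bool :=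
  [exists s : {perm 'I_i},
     [forall j : 'I_i, val (s j) == reduction p i j] && (#|porbits s| == 1)].

Definition Xstat n (p : {perm 'I_n}) : nat :=
  \max_(1 <= i < n.+1 | unicyclic_reduction p i) i.

Definition probX n (i : nat) : rat :=
  (#|[set p : {perm 'I_n} | Xstat p == i]|%:R / #|{perm 'I_n}|%:R)%R.

(* Main.v *)
From HB Require Import structures.
From mathcomp Require Import all_boot all_order all_algebra all_fingroup.
Require Import Defs.
From mathcomp Require Import zify ring.
Set Implicit Arguments. Unset Strict Implicit. Unset Printing Implicit Defensive.

Definition V n (p : {perm 'I_n}) (i : nat) : bool :=
  [forall x : 'I_n, forall y : 'I_n, (x < i) ==> (y < i) ==> (y \in porbit p x)].

Lemma porbit_trans (T : finType) (s : {perm T}) x y z :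
  y \in porbit s x -> z \in porbit s y -> z \in porbit s x.
Proof. by rewrite -!eq_porbit_mem => /eqP -> /eqP ->. Qed.

Lemma porbit_step (T : finType) (s : {perm T}) x : s x \in porbit s x.
Proof. by have := mem_porbit s 1 x; rewrite expg1. Qed.

Section Del.
Variable n : nat.
Local Notation m := (@ord_max n).

Definition G (x : {perm 'I_n} * 'I_n.+1) : {perm 'I_n.+1} :=
  (lift_perm m m x.1 * tperm x.2 m)%g.

Lemma G_max x : G x m = x.2.
Proof. by rewrite /G permM lift_perm_id tpermR. Qed.

Lemma G_inj : injective G.
Proof.
move=> [t a] [t' a'] E.
have Ea : a = a' by have := G_max (t,a); rewrite E G_max.
subst a'.
have E2 : lift_perm m m t = lift_perm m m t' by apply: (mulIg (tperm a m)); exact E.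
congr pair; apply/permP=> k; apply: (@lift_inj _ m).
by rewrite -!(lift_perm_lift m m) E2.
Qed.

Lemma G_bij : bijective G.
Proof.
apply: inj_card_bij G_inj _.
by rewrite card_prod !card_Sn card_ord factS mulnC.
Qed.

Lemma lift_permX t k : (lift_perm m m t ^+ k)%g = lift_perm m m (t ^+ k)%g.
Proof.
elim: k => [|k IH]; first by rewrite !expg0 lift_perm1.
by rewrite !expgS IH lift_permM.
Qed.

Lemma reach_lift t x y :
  (lift m y \in porbit (lift_perm m m t) (lift m x)) = (y \in porbit t x).
Proof.
apply/porbitP/porbitP => -[k Hk]; exists k.
  by apply: (@lift_inj _ m); rewrite Hk lift_permX lift_perm_lift.
by rewrite lift_permX lift_perm_lift Hk.
Qed.

Lemma reach_del (p : {perm 'I_n.+1}) x y : x != m -> y != m ->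
  (y \in porbit p x) = (y \in porbit (p * tperm (p m) m)%g x).
Proof.
set a := p m; set r := (p * tperm a m)%g.
have [Ea|Na] := eqVneq a m.
  by rewrite /r Ea tperm1 mulg1.
move=> xm ym.
have rE z : r z = tperm a m (p z) by rewrite /r permM.
apply/idP/idP.
-
  case/porbitP=> k Ey; rewrite Ey in ym *.
  suff H : forall k', k' <= k -> (p ^+ k')%g x != m -> (p ^+ k')%g x \in porbit r x.
    exact: H.
  clear Ey ym.
  elim: k => [|k IH] k' Hk'.
    by rewrite leqn0 in Hk'; rewrite (eqP Hk') expg0 perm1 porbit_id.
  rewrite leq_eqVlt in Hk'; case/orP: Hk' => [/eqP ->|]; last by rewrite ltnS; exact: IH.
  rewrite expgSr permM => Hne.
  have [Ez|Nz] := eqVneq ((p ^+ k)%g x) m.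
    case: k IH Ez Hne => [|k] IH Ez Hne; first by rewrite expg0 perm1 in Ez; rewrite Ez eqxx in xm.
    move: Ez; rewrite expgSr permM => Ez.
    have Nw : (p ^+ k)%g x != m.
      by apply/eqP => Ew; move: Ez; rewrite Ew -/a => Ez; rewrite Ez eqxx in Na.
    have := IH k (leqnSn k) Nw => Hw.
    apply: porbit_trans Hw _.
    rewrite Ez -/a; have <- : r ((p ^+ k)%g x) = a by rewrite rE Ez tpermR.
    exact: porbit_step.
  have := IH k (leqnn k) Nz => Hz.
  apply: porbit_trans Hz _.
  have <- : r ((p ^+ k)%g x) = p ((p ^+ k)%g x).
    rewrite rE tpermD //; last by rewrite eq_sym.
    apply: contraNneq Nz => Eq.
    by apply/eqP/(@perm_inj _ p); rewrite -Eq.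
  exact: porbit_step.
-
  case/porbitP=> k ->.
  elim: k => [|k IH]; first by rewrite expg0 perm1 porbit_id.
  apply: porbit_trans IH _; rewrite expgSr permM rE.
  set z := (r ^+ k)%g x.
  case: tpermP => [Ez|Ez|_ _]; last exact: porbit_step.
    by rewrite (perm_inj Ez) porbit_id.
  apply: porbit_trans (porbit_step _ _) _; rewrite Ez; exact: porbit_step.
Qed.

Lemma reach_G t a x y :
  (lift m y \in porbit (G (t, a)) (lift m x)) = (y \in porbit t x).
Proof.
rewrite reach_del; try by rewrite eq_sym neq_lift.
by rewrite G_max /G /= -mulgA tperm2 mulg1 reach_lift.
Qed.

Lemma val_liftm (x : 'I_n) : val (lift m x) = val x.
Proof. by rewrite /= /bump leqNgt ltn_ord. Qed.

Lemma lt_liftm (x : 'I_n.+1) : x < n -> exists x' : 'I_n, x = lift m x'.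
Proof. by move=> h; exists (Ordinal h); apply: val_inj; rewrite val_liftm. Qed.

Lemma VG_low t a i : i <= n -> V (G (t, a)) i = V t i.
Proof.
move=> hi; apply/forallP/forallP => H x.
  apply/forallP=> y; apply/implyP=> hx; apply/implyP=> hy.
  have := H (lift m x); move/forallP/(_ (lift m y)).
  by rewrite !val_liftm hx hy reach_G.
apply/forallP=> y; apply/implyP=> hx; apply/implyP=> hy.
have [x' Ex] := lt_liftm (leq_trans hx hi).
have [y' Ey] := lt_liftm (leq_trans hy hi).
subst x y; rewrite reach_G; have := H x'; move/forallP/(_ y').
by rewrite !val_liftm in hx hy; rewrite hx hy.
Qed.

End Del.

Lemma V_mono n (p : {perm 'I_n}) i j : j <= i -> V p i -> V p j.
Proof.
move=> ji /forallP H; apply/forallP=> x; apply/forallP=> y.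
apply/implyP=> hx; apply/implyP=> hy.
have := H x; move/forallP/(_ y).
by rewrite (leq_trans hx ji) (leq_trans hy ji).
Qed.

Lemma VG_top n t a : 0 < n -> V (@G n (t, a)) n.+1 = V t n && (a != ord_max).
Proof.
move=> n0; set g := G (t, a).
have gm : g ord_max = a by rewrite /g G_max.
apply/idP/andP.
  move=> H; split.
    rewrite -(VG_low t a (leqnn n)); exact: V_mono (leqnSn n) H.
  apply/eqP=> am; set x0 : 'I_n := Ordinal n0.
  move/forallP: H => /(_ (lift ord_max x0)) /forallP /(_ ord_max).
  rewrite val_liftm /= ltnSn /= porbit_sym => /porbitP[k E].
  rewrite permX_fix in E; last by rewrite gm am.
  by move: (neq_lift ord_max x0); rewrite E eqxx.
case=> Vt am; set x0 : 'I_n := Ordinal n0; set c := lift ord_max x0.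
have allc z : z \in porbit g c.
  case: (unliftP ord_max z) => [z'|] ->.
    rewrite reach_G; move/forallP: Vt => /(_ x0)/forallP/(_ z').
    by rewrite /= n0 ltn_ord.
  have : a \in porbit g c.
    case: (unliftP ord_max a) am => [a'|] ->; last by rewrite eqxx.
    move=> _.
    rewrite reach_G; move/forallP: Vt => /(_ x0)/forallP/(_ a').
    by rewrite /= n0 ltn_ord.
  move=> ac; apply: porbit_trans ac _.
  by rewrite porbit_sym -{1}gm porbit_step.
apply/forallP=> x; apply/forallP=> y; apply/implyP=> _; apply/implyP=> _.
by apply: porbit_trans (allc y); rewrite porbit_sym allc.
Qed.

Definition cnt n i := #|[set p : {perm 'I_n} | V p i]|.

Lemma count_G n (Q : pred {perm 'I_n.+1}) :
  #|[set p | Q p]| = #|[set x | Q (@G n x)]|.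
Proof.
rewrite -(on_card_preimset (R := [set p | Q p]) (onW_bij _ (@G_bij n))).
by apply: eq_card => x; rewrite !inE.
Qed.

Lemma cnt_low n i : i <= n -> cnt n.+1 i = cnt n i * n.+1.
Proof.
move=> hi; rewrite /cnt count_G.
have -> : [set x | V (@G n x) i] = setX [set t | V t i] setT.
  by apply/setP => -[t a]; rewrite !inE VG_low //= andbT.
by rewrite cardsX cardsT card_ord.
Qed.

Lemma cnt_top n : 0 < n -> cnt n.+1 n.+1 = cnt n n * n.
Proof.
move=> n0; rewrite /cnt count_G.
have -> : [set x | V (@G n x) n.+1] = setX [set t | V t n] [set~ ord_max].
  by apply/setP => -[t a]; rewrite !inE VG_top.
by rewrite cardsX cardsC1 card_ord.
Qed.

Lemma cnt_main n i : 0 < i <= n.+1 -> cnt n.+1 i * i = n.+1`!.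
Proof.
elim: n i => [|n IH] i /andP[i0 hi].
  have -> : i = 1 by apply/eqP; rewrite eqn_leq hi.
  rewrite muln1 /cnt -[RHS](card_Sn 1).
  apply: eq_card => p; rewrite !inE; apply/forallP=> x; apply/forallP=> y.
  by rewrite !ord1 porbit_id !implybT.
rewrite leq_eqVlt in hi; case/orP: hi => [/eqP ->|hi].
  by rewrite cnt_top // (IH n.+1) ?leqnn // factS mulnC.
rewrite cnt_low // mulnC mulnA [i * _]mulnC IH; last by rewrite i0.
by rewrite !factS mulnC.
Qed.


Lemma porbits1 (i : nat) (s : {perm 'I_i}) : 0 < i ->
  (#|porbits s| == 1) = [forall j1, forall j2, j2 \in porbit s j1].
Proof.
move=> i0; apply/idP/forallP.
  case/cards1P=> X EX j1; apply/forallP=> j2.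
  have h j : porbit s j = X.
    by apply/set1P; rewrite -EX; apply: imset_f.
  by rewrite h -(h j2) porbit_id.
move=> H; apply/cards1P; exists (porbit s (Ordinal i0)).
apply/setP=> Y; rewrite inE /porbits; apply/imsetP/eqP.
  case=> x _ ->; apply/eqP; rewrite eq_porbit_mem.
  by move/forallP: (H (Ordinal i0)) => /(_ x).
by move=> ->; exists (Ordinal i0).
Qed.

Section Bridge.
Variables (n : nat) (p : {perm 'I_n}) (i : nat).
Hypothesis hin : i <= n.

Lemma iter_pstep (x : 'I_n) k : iter k (pstep p) x = (p ^+ k)%g x.
Proof.
elim: k => [|k IH]; first by rewrite expg0 perm1.
by rewrite iterS IH /pstep valK expgSr permM.
Qed.

Lemma fr_spec (j : 'I_n) : j < i ->
  [/\ 0 < first_return p i j, ((p ^+ first_return p i j)%g j < i)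
    & forall l, 0 < l < first_return p i j -> ~~ ((p ^+ l)%g j < i)].
Proof.
move=> ji.
set P := fun k => iter k.+1 (pstep p) j < i.
have hasP : has P (iota 0 n).
  apply/hasP; exists (#|porbit p j|.-1).
    rewrite mem_iota /= add0n.
    have h1 := card_porbit_neq0 p j.
    have h2 : #|porbit p j| <= n by rewrite -[X in _ <= X]card_ord max_card.
    by case: #|porbit p j| h1 h2.
  rewrite /P prednK ?lt0n ?card_porbit_neq0 // iter_pstep permX iter_porbit //.
have hf : find P (iota 0 n) < n by rewrite -[X in _ < X](size_iota 0 n) -has_find.
have En : forall k, k < n -> nth 0 (iota 0 n) k = k.
  by move=> k hk; rewrite nth_iota // add0n.
rewrite /first_return; apply: And3; first by [].
  by have := nth_find 0 hasP; rewrite En // /P iter_pstep.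
case=> [//|l] /andP[_ hl].
have := before_find 0 hl; rewrite En; last by rewrite ltnS in hl; exact: ltn_trans hl hf.
by rewrite iter_pstep => ->.
Qed.

Lemma red_val (j : 'I_n) : reduction p i j = (p ^+ first_return p i j)%g j.
Proof. by rewrite /reduction iter_pstep. Qed.

Let w : 'I_i -> 'I_n := widen_ord hin.

Lemma red_lt (j : 'I_i) : reduction p i j < i.
Proof.
have := fr_spec (j := w j) (ltn_ord j) => -[_ h _].
by rewrite -[nat_of_ord j]/(nat_of_ord (w j)) red_val.
Qed.

Lemma reach_s (s : {perm 'I_i}) : (forall j, val (s j) = reduction p i j) ->
  forall j1 j2, (j2 \in porbit s j1) = (w j2 \in porbit p (w j1)).
Proof.
move=> sE.
have ws z : w (s z) = (p ^+ first_return p i z)%g (w z).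
  by apply: val_inj; rewrite /= sE; exact: (red_val (w z)).
move=> j1 j2; apply/idP/idP.
  case/porbitP=> k ->; elim: k => [|k IH]; first by rewrite expg0 perm1 porbit_id.
  apply: porbit_trans IH _; rewrite expgSr permM ws; exact: mem_porbit.
case/porbitP=> k Ek.
suff H : forall K k j, k <= K -> (p ^+ k)%g (w j) < i ->
    exists2 j', w j' = (p ^+ k)%g (w j) & j' \in porbit s j.
  have hk : (p ^+ k)%g (w j1) < i by rewrite -Ek; exact: (ltn_ord j2).
  have [j' Ej' Hj'] := H k k j1 (leqnn k) hk.
  by have -> : j2 = j' by apply: val_inj; rewrite -[val j2]/(val (w j2)) Ek -Ej'.
elim=> [|K IH] k0 j.
  by rewrite leqn0 => /eqP -> _; exists j; rewrite ?porbit_id // expg0 perm1.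
move=> hk hlt.
case: k0 hk hlt => [|k0] hk hlt.
  by exists j; rewrite ?porbit_id // expg0 perm1.
have [f0 _ fmin] := fr_spec (j := w j) (ltn_ord j).
set f := first_return p i (w j) in f0 fmin ws *.
have hf : f <= k0.+1.
  rewrite leqNgt; apply/negP=> hlt'; have := fmin k0.+1.
  by rewrite hlt' /= hlt => /(_ isT).
have E : (p ^+ k0.+1)%g (w j) = (p ^+ (k0.+1 - f))%g (w (s j)).
  by rewrite ws -permM -expgD subnKC.
rewrite E in hlt *.
have [|j' Ej' Hj'] := IH (k0.+1 - f) (s j) _ hlt.
  by move: hk f0; clear; lia.
exists j' => //; apply: porbit_trans Hj'; exact: porbit_step.
Qed.

Lemma h_inj : injective (fun j : 'I_i => Ordinal (red_lt j)).
Proof.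
have key : forall j1 j2 : 'I_i, first_return p i (w j1) <= first_return p i (w j2) ->
   reduction p i j1 = reduction p i j2 -> j1 = j2.
  move=> j1 j2 le E.
  have [f1 _ _] := fr_spec (j := w j1) (ltn_ord j1).
  have [_ _ fmin] := fr_spec (j := w j2) (ltn_ord j2).
  move: E le; rewrite -[nat_of_ord j1]/(nat_of_ord (w j1)) -[nat_of_ord j2]/(nat_of_ord (w j2)).
  rewrite !red_val => /val_inj.
  set f1' := first_return p i (w j1); set f2 := first_return p i (w j2) in fmin *.
  move=> E le.
  have E2 : (p ^+ f1')%g (w j1) = (p ^+ f1')%g ((p ^+ (f2 - f1'))%g (w j2)).
    by rewrite E -permM -expgD subnK.
  have E3 := perm_inj E2.
  case: (posnP (f2 - f1')) E3 => [-> |d0] E3.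
    by apply: val_inj; rewrite -[val j1]/(val (w j1)) E3 expg0 perm1.
  have := fmin (f2 - f1'); rewrite d0 /= -E3.
  have lt : f2 - f1' < f2 by move: f1 d0; rewrite -/f1'; clear; lia.
  by move=> /(_ lt) /negP[]; exact: (ltn_ord j1).
move=> j1 j2 /(congr1 val) /= E.
case: (leqP (first_return p i (w j1)) (first_return p i (w j2))) => h.
  exact: key.
by apply/esym/key => //; apply: ltnW.
Qed.

Lemma U_V : 0 < i -> unicyclic_reduction p i = V p i.
Proof.
move=> i0.
have VE : V p i = [forall j1 : 'I_i, forall j2 : 'I_i, w j2 \in porbit p (w j1)].
  apply/forallP/forallP => H x.
    apply/forallP=> y; move/forallP: (H (w x)) => /(_ (w y)).
    by rewrite /= !ltn_ord.
  apply/forallP=> y; apply/implyP=> hx; apply/implyP=> hy.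
  move/forallP: (H (Ordinal hx)) => /(_ (Ordinal hy)).
  have -> : w (Ordinal hx) = x by apply: val_inj.
  by have -> : w (Ordinal hy) = y by apply: val_inj.
rewrite VE; apply/existsP/idP.
  case=> s /andP[/forallP sE c1].
  have sE' j : val (s j) = reduction p i j by apply/eqP.
  rewrite porbits1 // in c1; apply/forallP=> j1; apply/forallP=> j2.
  by rewrite -(reach_s sE'); move/forallP: c1 => /(_ j1)/forallP/(_ j2).
move=> H; exists (perm h_inj); apply/andP; split.
  by apply/forallP=> j; rewrite permE.
rewrite porbits1 //; apply/forallP=> j1; apply/forallP=> j2.
rewrite reach_s; first by move/forallP: H => /(_ j1)/forallP/(_ j2).
by move=> j; rewrite permE.
Qed.

End Bridge.


Section Final.
Variables (n : nat) (p : {perm 'I_n}).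

Lemma X_ge i : 0 < i <= n -> V p i -> i <= Xstat p.
Proof.
move=> /andP[i0 hi] Vi; rewrite /Xstat.
apply: (leq_bigmax_seq i).
  by rewrite mem_index_iota i0 ltnS.
by rewrite U_V.
Qed.

Lemma X_le i : 0 < i <= n -> (Xstat p <= i) = ((i < n) ==> ~~ V p i.+1).
Proof.
move=> /andP[i0 hi]; apply/bigmax_leqP_seq/implyP.
  move=> H lt; apply/negP=> Vi.
  have h1 : i.+1 \in index_iota 1 n.+1 by rewrite mem_index_iota ltnS.
  have h2 : unicyclic_reduction p i.+1 by rewrite U_V.
  by have := H _ h1 h2; rewrite ltnn.
move=> H k; rewrite mem_index_iota => /andP[k0 kn]; rewrite U_V // => Vk.
rewrite leqNgt; apply/negP=> ik.
have lt : i < n by apply: leq_trans ik kn.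
by move: (H lt); rewrite (V_mono ik Vk).
Qed.

Lemma X_eq i : 0 < i <= n ->
  (Xstat p == i) = V p i && ((i < n) ==> ~~ V p i.+1).
Proof.
move=> hi; rewrite eqn_leq X_le // andbC; congr andb.
apply/idP/idP; last exact: X_ge.
move: hi => /andP[i0 hi] le; apply/negP=> nV.
have : Xstat p <= i.-1.
  apply/bigmax_leqP_seq => k; rewrite mem_index_iota => /andP[k0 kn].
  rewrite U_V // => Vk; rewrite -ltnS prednK //; rewrite ltnNge; apply/negP=> ik.
  by move: nV; rewrite (V_mono ik Vk).
by move=> h; move: (leq_trans le h); case: (i) i0 => // j _; rewrite ltnn.
Qed.

End Final.

Import GRing.Theory Num.Theory.
Local Open Scope ring_scope.

Theorem mainTheorem1 (n : nat) (hn : (0 < n)%N) :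
  (forall i : nat, (1 <= i < n)%N ->
     probX n i = i%:R^-1 - (i.+1)%:R^-1 /\
     probX n i = (i%:R * (i.+1)%:R)^-1) /\
  probX n n = n%:R^-1.
Proof.
case: n hn => // n _.
have cardS : #|{perm 'I_n.+1}| = (n.+1)`! by rewrite card_Sn.
have N0 : ((n.+1)`!)%:R != 0 :> rat by rewrite pnatr_eq0 -lt0n fact_gt0.
have cE i : (0 < i <= n.+1)%N -> (cnt n.+1 i)%:R = ((n.+1)`!)%:R / i%:R :> rat.
  move=> hi; rewrite -(cnt_main hi) natrM mulfK //.
  by rewrite pnatr_eq0 -lt0n; case/andP: hi.
split.
  move=> i /andP[i0 hi].
  have E : #|[set p : {perm 'I_n.+1} | Xstat p == i]| = (cnt n.+1 i - cnt n.+1 i.+1)%N.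
    have sub : [set p : {perm 'I_n.+1} | V p i] :&: [set p | V p i.+1] = [set p | V p i.+1].
      apply/setIidPr/subsetP => p; rewrite !inE; exact: V_mono.
    have hi2 : (0 < i <= n.+1)%N by rewrite i0 ltnW.
    by rewrite /cnt -sub -cardsD; apply: eq_card => p; rewrite !inE (X_eq _ hi2) hi /= andbC.
  have le : (cnt n.+1 i.+1 <= cnt n.+1 i)%N.
    rewrite /cnt; apply: subset_leq_card; apply/subsetP => p; rewrite !inE; exact: V_mono.
  have first : probX n.+1 i = i%:R^-1 - (i.+1)%:R^-1.
    rewrite /probX E cardS natrB // cE ?i0 1?ltnW // cE ?hi //.
    have i0' : i%:R != 0 :> rat by rewrite pnatr_eq0 -lt0n.
    have i1' : (i.+1)%:R != 0 :> rat by rewrite pnatr_eq0.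
    by field; rewrite nat1r i1' i0' N0.
  split => //; rewrite first.
  have i0' : i%:R != 0 :> rat by rewrite pnatr_eq0 -lt0n.
  have i1' : (i.+1)%:R != 0 :> rat by rewrite pnatr_eq0.
  by field; rewrite ?nat1r i1' i0'.
have E : #|[set p : {perm 'I_n.+1} | Xstat p == n.+1]| = cnt n.+1 n.+1.
  by apply: eq_card => p; rewrite !inE X_eq ?leqnn // ltnn andbT.
rewrite /probX E cardS cE ?leqnn // mulrC mulKf //.
Qed.
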